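(* For every state $s$ (closed term of type $\mathsf{State}$), the pair $(\Vdash^s_{\mathcal{IR}},\Vdash^s)$ is a monadic realizability relation for the syntactic monad $\mathcal{IR}$; that is, (MR1) if $r\Vdash^s A$ then $\mathsf{unit}\,r\Vdash^s_{\mathcal{IR}}A$; (MR2) if $r\Vdash^s B\to C$ then $\mathsf{star}\,r\,p\Vdash^s_{\mathcal{IR}}C$ for every $p:\|B\|$ with $p\Vdash^s_{\mathcal{IR}}B$; (MR3) if $p\Vdash^s_{\mathcal{IR}}B$ and $q\Vdash^s_{\mathcal{IR}}C$ then $\mathsf{merge}\,p\,q\Vdash^s_{\mathcal{IR}}B\wedge C$ (for all closed formulas $A,B,C$).
   Context: System $T'$: simply typed $\lambda$-calculus with types from atomic types $\mathsf{Unit},\mathsf{Nat},\mathsf{State},\mathsf{Ex}$ (and others) by $\to,\times,+$; constants $\star$, $\langle\cdot,\cdot\rangle$, $\pi_1,\pi_2$, $\mathrm{inl},\mathrm{inr}$, $\mathrm{case}$, $0$, $\mathrm{succ}$, a bounded recursor, and $\mathsf{exmerge}:\mathsf{Ex}\to\mathsf{Ex}\to\mathsf{Ex}$; usual $\beta$, projection and case reductions; $t\leadsto u$: $t$ reduces to $u$; $\bar n$ numerals. States and exceptions: each closed $s:\mathsf{State}$ denotes a finite partial function $[\![s]\!]$ from pairs (a $(k+1)$-ary predicate symbol $P$, a tuple $(m_1,\dots,m_k)\in\mathbb N^k$) to $\mathbb N$ which is sound: $[\![s]\!](P,\vec m)=m$ implies $P(\vec m,m)$. States are ordered by extension $\le$.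 Each closed $e:\mathsf{Ex}$ denotes a partial function $[\![e]\!]$ on states with $s\le[\![e]\!](s)$ whenever defined. $e$ properly extends $s$ iff $[\![e]\!](s)$ is defined and $s<[\![e]\!](s)$. $\mathsf{exmerge}$ satisfies (EX): if $e_1$ and $e_2$ both properly extend $s$ then $\mathsf{exmerge}\,e_1\,e_2$ properly extends $s$. Monad $\mathcal{IR}$: $\mathsf TX=\mathsf{State}\to(X+\mathsf{Ex})$; $\mathsf{unit}=\lambda x\lambda\_.\mathrm{inl}\,x$; $\mathsf{star}=\lambda f\lambda a\lambda s.\mathrm{case}(as)(\lambda x.fxs)\mathrm{inr}$; $\mathsf{merge}=\lambda a\lambda b\lambda s.\mathrm{case}(as)(\lambda x.\mathrm{case}(bs)(\lambda y.\mathrm{inl}\langle x,y\rangle)\mathrm{inr})(\lambda e_1.\mathrm{case}(bs)(\lambda\_.\mathrm{inr}\,e_1)(\lambda e_2.\mathrm{inr}(\mathsf{exmerge}\,e_1e_2)))$. Formulas: first-order arithmetic, decidable atomic predicates, $\bot$ atomic never true. Types: $\|A\|=\mathsf T|A|$, $|P|=\mathsf{Unit}$, $|B\wedge C|=|B|\times|C|$, $|B\vee C|=|B|+|C|$, $|\exists xB|=\mathsf{Nat}\times|B|$, $|B\to C|=|B|\to\|C\|$, $|\forall xB|=\mathsf{Nat}\to\|B\|$. Interactive realizability relations (simultaneous induction on closed $A$): $p\Vdash^s_{\mathcal{IR}}A$ (for $p:\|A\|$) iff either $p\,s\leadsto\mathrm{inl}\,r$ with $r\Vdash^sA$, or $p\,s\leadsto\mathrm{inr}\,e$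 with $e$ properly extending $s$; and $r\Vdash^sP$ iff $r\leadsto\star$ and $P$ true; $r\Vdash^sB\wedge C$ iff $\pi_1r\Vdash^sB$ and $\pi_2r\Vdash^sC$; $r\Vdash^sB\vee C$ iff $r\leadsto\mathrm{inl}\,a$ with $a\Vdash^sB$ or $r\leadsto\mathrm{inr}\,b$ with $b\Vdash^sC$; $r\Vdash^sB\to C$ iff $rp\Vdash^s_{\mathcal{IR}}C$ for all $p\Vdash^sB$; $r\Vdash^s\forall xB$ iff $r\bar n\Vdash^s_{\mathcal{IR}}B[x:=\bar n]$ for all $n$; $r\Vdash^s\exists xB$ iff $\pi_2r\Vdash^sB[x:=\pi_1r]$. *)

(* Defs.v *)
From Stdlib Require Import List Arith.
Import ListNotations.

Inductive ty : Type :=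
| TUnit | TNat | TState | TEx
| TAtom (n : nat)
| TArr (A B : ty) | TProd (A B : ty) | TSum (A B : ty).

Inductive const : Type :=
| CStar | CPair | CP1 | CP2 | CInl | CInr | CCase
| CZero | CSucc | CRec | CExmerge
| CState (n : nat)
| CExc (n : nat).

Inductive term : Type :=
| Var (n : nat)
| Lam (t : term)
| App (t u : term)
| Con (c : const).

Inductive has_type : list ty -> term -> ty -> Prop :=
| ht_var G n T : nth_error G n = Some T -> has_type G (Var n) T
| ht_lam G t A B : has_type (A :: G) t B -> has_type G (Lam t) (TArr A B)
| ht_app G t u A B : has_type G t (TArr A B) -> has_type G u A -> has_type G (App t u) B
| ht_star G : has_type G (Con CStar) TUnit
| ht_pair G A B : has_type G (Con CPair) (TArr A (TArr B (TProd A B)))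
| ht_p1 G A B : has_type G (Con CP1) (TArr (TProd A B) A)
| ht_p2 G A B : has_type G (Con CP2) (TArr (TProd A B) B)
| ht_inl G A B : has_type G (Con CInl) (TArr A (TSum A B))
| ht_inr G A B : has_type G (Con CInr) (TArr B (TSum A B))
| ht_case G A B C :
    has_type G (Con CCase) (TArr (TSum A B) (TArr (TArr A C) (TArr (TArr B C) C)))
| ht_zero G : has_type G (Con CZero) TNat
| ht_succ G : has_type G (Con CSucc) (TArr TNat TNat)
| ht_rec G T :
    has_type G (Con CRec) (TArr T (TArr (TArr TNat (TArr T T)) (TArr TNat T)))
| ht_exmerge G : has_type G (Con CExmerge) (TArr TEx (TArr TEx TEx))
| ht_state G n : has_type G (Con (CState n)) TState
| ht_exc G n : has_type G (Con (CExc n)) TEx.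

Fixpoint lift (d c : nat) (t : term) : term :=
  match t with
  | Var n => if c <=? n then Var (n + d) else Var n
  | Lam t => Lam (lift d (S c) t)
  | App t u => App (lift d c t) (lift d c u)
  | Con k => Con k
  end.

Fixpoint subst (k : nat) (u : term) (t : term) : term :=
  match t with
  | Var n => if n =? k then lift k 0 u
             else if k <? n then Var (pred n) else Var n
  | Lam t => Lam (subst (S k) u t)
  | App t1 t2 => App (subst k u t1) (subst k u t2)
  | Con c => Con c
  end.

Notation "'ap2' f a b" := (App (App f a) b) (at level 10, f at level 9, a at level 9, b at level 9).
Notation "'ap3' f a b c" := (App (App (App f a) b) c)
  (at level 10, f at level 9, a at level 9, b at level 9, c at level 9).

Inductive step : term -> term -> Prop :=
| st_beta t u : step (App (Lam t) u) (subst 0 u t)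
| st_p1 a b : step (App (Con CP1) (ap2 (Con CPair) a b)) a
| st_p2 a b : step (App (Con CP2) (ap2 (Con CPair) a b)) b
| st_case_inl a f g : step (ap3 (Con CCase) (App (Con CInl) a) f g) (App f a)
| st_case_inr b f g : step (ap3 (Con CCase) (App (Con CInr) b) f g) (App g b)
| st_rec0 u v : step (ap3 (Con CRec) u v (Con CZero)) u
| st_recS u v n : step (ap3 (Con CRec) u v (App (Con CSucc) n))
                       (ap2 v n (ap3 (Con CRec) u v n))
| st_appl t t' u : step t t' -> step (App t u) (App t' u)
| st_appr t u u' : step u u' -> step (App t u) (App t u')
| st_lam t t' : step t t' -> step (Lam t) (Lam t').

Inductive reds : term -> term -> Prop :=
| reds_refl t : reds t t
| reds_step t u v : step t u -> reds u v -> reds t v.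

Fixpoint num (n : nat) : term :=
  match n with 0 => Con CZero | S n => App (Con CSucc) (num n) end.

Definition TT (X : ty) : ty := TArr TState (TSum X TEx).

(* unit = \x \_. inl x *)
Definition unitT : term := Lam (Lam (App (Con CInl) (Var 1))).
(* star = \f \a \s. case (a s) (\x. f x s) inr *)
Definition starT : term :=
  Lam (Lam (Lam (ap3 (Con CCase) (App (Var 1) (Var 0))
                       (Lam (ap2 (Var 3) (Var 0) (Var 1)))
                       (Con CInr)))).
(* merge = \a \b \s. case (a s) (\x. case (b s) (\y. inl <x,y>) inr)
                               (\e1. case (b s) (\_. inr e1) (\e2. inr (exmerge e1 e2))) *)
Definition mergeT : term :=
  Lam (Lam (Lam (ap3 (Con CCase) (App (Var 2) (Var 0))
    (Lam (ap3 (Con CCase) (App (Var 2) (Var 1))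
             (Lam (App (Con CInl) (ap2 (Con CPair) (Var 1) (Var 0))))
             (Con CInr)))
    (Lam (ap3 (Con CCase) (App (Var 2) (Var 1))
             (Lam (App (Con CInr) (Var 1)))
             (Lam (App (Con CInr) (ap2 (Con CExmerge) (Var 1) (Var 0))))))))).

(* finite partial functions from (predicate symbol, tuple) to nat *)
Definition pfun : Type := nat -> list nat -> option nat.

Definition pfinite (f : pfun) : Prop :=
  exists l : list (nat * list nat), forall P ms, f P ms <> None -> In (P, ms) l.

(* pint P ns = truth of the decidable predicate with symbol P on ns *)
Definition psound (pint : nat -> list nat -> bool) (f : pfun) : Prop :=
  forall P ms m, f P ms = Some m -> pint P (ms ++ [m]) = true.

Definition pext (f g : pfun) : Prop :=
  forall P ms m, f P ms = Some m -> g P ms = Some m.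

Definition pext_strict (f g : pfun) : Prop :=
  pext f g /\ exists P ms, f P ms <> g P ms.

Record setup : Type := {
  pint : nat -> list nat -> bool;
  st_den : term -> pfun;
  ex_den : term -> pfun -> option pfun
}.

Definition closedT (t : term) (T : ty) : Prop := has_type [] t T.

Definition proper_ext (S : setup) (e s : term) : Prop :=
  exists g, ex_den S e (st_den S s) = Some g /\ pext_strict (st_den S s) g.

Definition wf_setup (S : setup) : Prop :=
  (forall s, closedT s TState -> pfinite (st_den S s) /\ psound (pint S) (st_den S s)) /\
  (forall e f g, closedT e TEx -> pfinite f -> psound (pint S) f ->
      ex_den S e f = Some g -> pext f g /\ pfinite g /\ psound (pint S) g) /\
  (forall e1 e2 s, closedT e1 TEx -> closedT e2 TEx -> closedT s TState ->
      proper_ext S e1 s -> proper_ext S e2 s ->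
      proper_ext S (ap2 (Con CExmerge) e1 e2) s).

(** * Formulas (first-order terms are T' terms of type Nat; de Bruijn) *)
Inductive formula : Type :=
| FAtom (P : nat) (ts : list term)
| FBot
| FAnd (B C : formula)
| FOr (B C : formula)
| FImp (B C : formula)
| FAll (B : formula)
| FEx (B : formula).

Fixpoint closed_at (k : nat) (t : term) : Prop :=
  match t with
  | Var n => n < k
  | Lam t => closed_at (S k) t
  | App t u => closed_at k t /\ closed_at k u
  | Con _ => True
  end.

Fixpoint fclosed_at (k : nat) (A : formula) : Prop :=
  match A with
  | FAtom _ ts => Forall (closed_at k) ts
  | FBot => True
  | FAnd B C | FOr B C | FImp B C => fclosed_at k B /\ fclosed_at k C
  | FAll B | FEx B => fclosed_at (S k) B
  end.

Definition closed_formula (A : formula) : Prop := fclosed_at 0 A.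

Fixpoint rtype (A : formula) : ty :=
  match A with
  | FAtom _ _ | FBot => TUnit
  | FAnd B C => TProd (rtype B) (rtype C)
  | FOr B C => TSum (rtype B) (rtype C)
  | FImp B C => TArr (rtype B) (TT (rtype C))
  | FAll B => TArr TNat (TT (rtype B))
  | FEx B => TProd TNat (rtype B)
  end.

(* closing substitution: rho = [u0; u1; ...], u0 for the innermost bound variable;
   msubst (u :: rho) t = msubst rho (t[0 := u]) *)
Fixpoint msubst (rho : list term) (t : term) : term :=
  match rho with
  | [] => t
  | u :: rho' => msubst rho' (subst 0 u t)
  end.

Definition atom_true (S : setup) (P : nat) (ts : list term) : Prop :=
  exists ns, Forall2 (fun t n => reds t (num n)) ts ns /\ pint S P ns = true.

(* real S s rho A r : r ||-^s A[rho]  (A[rho] = A with its free variables closed by rho) *)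
Fixpoint real (S : setup) (s : term) (rho : list term) (A : formula) (r : term)
  {struct A} : Prop :=
  closedT r (rtype A) /\
  match A with
  | FAtom P ts => reds r (Con CStar) /\ atom_true S P (map (msubst rho) ts)
  | FBot => reds r (Con CStar) /\ False
  | FAnd B C => real S s rho B (App (Con CP1) r) /\ real S s rho C (App (Con CP2) r)
  | FOr B C =>
      (exists a, reds r (App (Con CInl) a) /\ real S s rho B a) \/
      (exists b, reds r (App (Con CInr) b) /\ real S s rho C b)
  | FImp B C =>
      forall p, real S s rho B p ->
        closedT (App r p) (TT (rtype C)) /\
        ((exists x, reds (App (App r p) s) (App (Con CInl) x) /\ real S s rho C x) \/
         (exists e, reds (App (App r p) s) (App (Con CInr) e) /\ proper_ext S e s))
  | FAll B =>
      forall n,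
        closedT (App r (num n)) (TT (rtype B)) /\
        ((exists x, reds (App (App r (num n)) s) (App (Con CInl) x) /\
                    real S s (num n :: rho) B x) \/
         (exists e, reds (App (App r (num n)) s) (App (Con CInr) e) /\ proper_ext S e s))
  | FEx B => real S s (App (Con CP1) r :: rho) B (App (Con CP2) r)
  end.

Definition realIR (S : setup) (s : term) (rho : list term) (A : formula) (p : term) : Prop :=
  closedT p (TT (rtype A)) /\
  ((exists x, reds (App p s) (App (Con CInl) x) /\ real S s rho A x) \/
   (exists e, reds (App p s) (App (Con CInr) e) /\ proper_ext S e s)).

(* Main.v *)
Require Import Defs.
From Stdlib Require Import List Arith Lia.
Import ListNotations.


Lemma lift_var : forall d c n, lift d c (Var n) = if c <=? n then Var (n + d) else Var n.
Proof. reflexivity. Qed.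
Lemma subst_var : forall k u n, subst k u (Var n) =
  if n =? k then lift k 0 u else if k <? n then Var (pred n) else Var n.
Proof. reflexivity. Qed.

Ltac vt := repeat (rewrite ?lift_var, ?subst_var; match goal with
    | |- context [?a =? ?b] => destruct (Nat.eqb_spec a b)
    | |- context [?a <? ?b] => destruct (Nat.ltb_spec a b)
    | |- context [?a <=? ?b] => destruct (Nat.leb_spec a b)
    end); try (f_equal; lia); try lia.

Lemma lift_lift1 : forall t d d' c c', c' <= c ->
  lift d (c + d') (lift d' c' t) = lift d' c' (lift d c t).
Proof.
  induction t; intros.
  - vt.
  - simpl. f_equal. replace (S (c + d')) with (S c + d') by lia. apply IHt. lia.
  - simpl; f_equal; auto.
  - reflexivity.
Qed.

Lemma lift_lift2 : forall t d d' c c', c' <= c -> c <= c' + d' ->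
  lift d c (lift d' c' t) = lift (d + d') c' t.
Proof.
  induction t; intros.
  - vt.
  - simpl; f_equal. apply IHt; lia.
  - simpl; f_equal; auto.
  - reflexivity.
Qed.

Lemma subst_lift_cancel : forall t w d c k, c <= k -> k < c + d ->
  subst k w (lift d c t) = lift (d - 1) c t.
Proof.
  induction t; intros.
  - vt.
  - simpl; f_equal. apply IHt; lia.
  - simpl; f_equal; auto.
  - reflexivity.
Qed.

Lemma subst_lift1 : forall t v j d c, c <= j ->
  subst (j + d) v (lift d c t) = lift d c (subst j v t).
Proof.
  induction t; intros.
  - vt. subst. rewrite lift_lift2 by lia. f_equal; lia.
  - simpl; f_equal. replace (S (j + d)) with (S j + d) by lia. apply IHt; lia.
  - simpl; f_equal; auto.
  - reflexivity.
Qed.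

Lemma lift_subst : forall t u d c k, k <= c ->
  lift d c (subst k u t) = subst k (lift d (c - k) u) (lift d (S c) t).
Proof.
  induction t; intros.
  - vt. subst.
    pose proof (lift_lift1 u d k (c - k) 0 ltac:(lia)) as H1.
    replace (c - k + k) with c in H1 by lia. exact H1.
  - simpl; f_equal. rewrite IHt by lia. f_equal.
  - simpl; f_equal; auto.
  - reflexivity.
Qed.

Lemma subst_subst : forall t u v j k, k <= j ->
  subst j v (subst k u t) = subst k (subst (j - k) v u) (subst (S j) v t).
Proof.
  induction t; intros.
  - vt.
    + subst. pose proof (subst_lift1 u v (j - k) k 0 ltac:(lia)) as H1.
      replace (j - k + k) with j in H1 by lia. exact H1.
    + subst. rewrite subst_lift_cancel by lia. f_equal; lia.
  - simpl; f_equal. rewrite IHt by lia. f_equal.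
  - simpl; f_equal; auto.
  - reflexivity.
Qed.


Inductive par : term -> term -> Prop :=
| par_var n : par (Var n) (Var n)
| par_con c : par (Con c) (Con c)
| par_lam t t' : par t t' -> par (Lam t) (Lam t')
| par_app t t' u u' : par t t' -> par u u' -> par (App t u) (App t' u')
| par_beta b b' u u' : par b b' -> par u u' -> par (App (Lam b) u) (subst 0 u' b')
| par_p1 a a' b : par a a' -> par (App (Con CP1) (ap2 (Con CPair) a b)) a'
| par_p2 a b b' : par b b' -> par (App (Con CP2) (ap2 (Con CPair) a b)) b'
| par_cinl a a' f f' g : par a a' -> par f f' ->
    par (ap3 (Con CCase) (App (Con CInl) a) f g) (App f' a')
| par_cinr b b' f g g' : par b b' -> par g g' ->
    par (ap3 (Con CCase) (App (Con CInr) b) f g) (App g' b')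
| par_rec0 u u' v : par u u' -> par (ap3 (Con CRec) u v (Con CZero)) u'
| par_recS u u' v v' n n' : par u u' -> par v v' -> par n n' ->
    par (ap3 (Con CRec) u v (App (Con CSucc) n)) (ap2 v' n' (ap3 (Con CRec) u' v' n')).

Lemma par_refl : forall t, par t t.
Proof. induction t; constructor; auto. Qed.
Hint Resolve par_refl : core.

Lemma step_par : forall t u, step t u -> par t u.
Proof. induction 1; try (constructor; auto; fail); econstructor; eauto. Qed.

Lemma reds_trans : forall a b c, reds a b -> reds b c -> reds a c.
Proof. induction 1; intros; auto. econstructor; eauto. Qed.
Lemma reds_one : forall a b, step a b -> reds a b.
Proof. intros. econstructor; eauto. constructor. Qed.
Lemma reds_appl : forall t t' u, reds t t' -> reds (App t u) (App t' u).
Proof. induction 1. constructor. econstructor. apply st_appl; eauto. auto. Qed.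
Lemma reds_appr : forall t u u', reds u u' -> reds (App t u) (App t u').
Proof. induction 1. constructor. econstructor. apply st_appr; eauto. auto. Qed.
Lemma reds_lam : forall t t', reds t t' -> reds (Lam t) (Lam t').
Proof. induction 1. constructor. econstructor. apply st_lam; eauto. auto. Qed.
Lemma reds_app : forall t t' u u', reds t t' -> reds u u' -> reds (App t u) (App t' u').
Proof. intros. eapply reds_trans. apply reds_appl; eauto. apply reds_appr; auto. Qed.

Lemma par_reds : forall t u, par t u -> reds t u.
Proof.
  induction 1.
  - constructor.
  - constructor.
  - apply reds_lam; auto.
  - apply reds_app; auto.
  - eapply reds_trans. apply reds_app. apply reds_lam. eauto. eauto.
    apply reds_one. constructor.
  - eapply reds_trans. apply reds_one. constructor. auto.
  - eapply reds_trans. apply reds_one. constructor. auto.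
  - eapply reds_trans. apply reds_one. constructor. apply reds_app; auto.
  - eapply reds_trans. apply reds_one. constructor. apply reds_app; auto.
  - eapply reds_trans. apply reds_one. constructor. auto.
  - eapply reds_trans. apply reds_one. constructor.
    repeat apply reds_app; auto; constructor.
Qed.

Lemma par_lift : forall t t', par t t' -> forall d c, par (lift d c t) (lift d c t').
Proof.
  induction 1; intros; simpl; try (econstructor; eauto; fail).
  - destruct (c <=? n); constructor.
  - rewrite lift_subst by lia. rewrite Nat.sub_0_r. constructor; auto.
Qed.

Lemma par_subst : forall t t', par t t' -> forall k u u', par u u' ->
  par (subst k u t) (subst k u' t').
Proof.
  induction 1; intros; simpl; try (econstructor; eauto; fail).
  - destruct (n =? k). apply par_lift; auto. destruct (k <? n); constructor.
  - rewrite subst_subst by lia. rewrite Nat.sub_0_r. constructor; auto.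
Qed.

Definition cd_step (rec : term -> term) (t : term) : term :=
  match t with
  | Var n => Var n
  | Lam b => Lam (rec b)
  | Con c => Con c
  | App t1 u =>
    match t1 with
    | Lam b => subst 0 (rec u) (rec b)
    | Con CP1 => match u with
                 | App (App (Con CPair) a) _ => rec a
                 | _ => App (rec t1) (rec u) end
    | Con CP2 => match u with
                 | App (App (Con CPair) _) b => rec b
                 | _ => App (rec t1) (rec u) end
    | App (App (Con CCase) x) f =>
        match x with
        | App (Con CInl) a => App (rec f) (rec a)
        | App (Con CInr) b => App (rec u) (rec b)
        | _ => App (rec t1) (rec u) end
    | App (App (Con CRec) a) v =>
        match u with
        | Con CZero => rec a
        | App (Con CSucc) n => ap2 (rec v) (rec n) (ap3 (Con CRec) (rec a) (rec v) (rec n))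
        | _ => App (rec t1) (rec u) end
    | _ => App (rec t1) (rec u)
    end
  end.
Fixpoint cd (t : term) : term := cd_step cd t.


Ltac inv_one := match goal with
 | H : par (Con _) _ |- _ => inversion H; subst; clear H
 | H : par (Lam _) _ |- _ => inversion H; subst; clear H
 | H : par (App (Con ?c) _) _ |- _ =>
     match c with CP1 => fail 1 | CP2 => fail 1 | _ => inversion H; subst; clear H end
 | H : par (App (App (Con _) _) _) _ |- _ => inversion H; subst; clear H
 end.

Definition TRI t u := forall t' u', par t t' -> par u u' -> par t' (cd t) -> par u' (cd u) ->
  par (App t' u') (cd (App t u)).

Lemma tri_p1 : forall a b, TRI (Con CP1) (ap2 (Con CPair) a b).
Proof. unfold TRI; intros. simpl in *. repeat inv_one. apply par_p1. assumption. Qed.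
Lemma tri_p2 : forall a b, TRI (Con CP2) (ap2 (Con CPair) a b).
Proof. unfold TRI; intros. simpl in *. repeat inv_one. apply par_p2. assumption. Qed.
Lemma tri_cinl : forall a f g, TRI (ap2 (Con CCase) (App (Con CInl) a) f) g.
Proof. unfold TRI; intros. simpl in *. repeat inv_one. apply par_cinl; assumption. Qed.
Lemma tri_cinr : forall a f g, TRI (ap2 (Con CCase) (App (Con CInr) a) f) g.
Proof. unfold TRI; intros. simpl in *. repeat inv_one. apply par_cinr; assumption. Qed.
Lemma tri_rec0 : forall a f, TRI (ap2 (Con CRec) a f) (Con CZero).
Proof. unfold TRI; intros. simpl in *. repeat inv_one. apply par_rec0; assumption. Qed.
Lemma tri_recS : forall a f n, TRI (ap2 (Con CRec) a f) (App (Con CSucc) n).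
Proof. unfold TRI; intros. simpl in *. repeat inv_one. apply par_recS; assumption. Qed.
Lemma tri_lam : forall b u, TRI (Lam b) u.
Proof. unfold TRI; intros. inversion H; subst. simpl in *. inversion H1; subst.
  apply par_beta; assumption. Qed.

Ltac sdef := unfold TRI; intros ? ? ? ? H1 H2;
  lazymatch goal with |- par _ (cd (App ?t ?u)) =>
    replace (cd (App t u)) with (App (cd t) (cd u)) by reflexivity end;
  apply par_app; assumption.
Lemma tri_app : forall t u, TRI t u.
Proof.
  intros t u. destruct t as [n|b|t1 t2|c].
  - sdef.
  - apply tri_lam.
  - destruct t1 as [n|b|t11 t12|c]; [sdef|sdef| |sdef].
    destruct t11 as [n|b|x y|c]; [sdef|sdef|sdef| ].
    destruct c; [sdef | sdef | sdef | sdef | sdef | sdef | (destruct t12 as [n|b|x1 x2|c]; [sdef|sdef| (destruct x1 as [n|b|y1 y2|c]; [sdef|sdef|sdef| destruct c; [sdef | sdef | sdef | sdef | apply tri_cinl | apply tri_cinr | sdef | sdef | sdef | sdef | sdef | sdef | sdef]]) |sdef]) | sdef | sdef | (destruct u as [n|b|x1 x2|c]; [sdef|sdef| (destruct x1 as [n|b|y1 y2|c]; [sdef|sdef|sdef| destruct c; [sdef | sdef | sdef | sdef | sdef | sdef | sdef | sdef | apply tri_recS | sdef | sdef | sdef | sdef]]) | destruct c; [sdef | sdef | sdef | sdef | sdef | sdef | sdef | apply tri_rec0 | sdef | sdef | sdef | sdef | sdef]]) | sdef | sdef | sdef].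
  - destruct c; [sdef | sdef | (destruct u as [n|b|u1 u2|c]; [sdef|sdef| (destruct u1 as [n|b|u11 u12|c]; [sdef|sdef| (destruct u11 as [n|b|v1 v2|c]; [sdef|sdef|sdef| destruct c; [sdef | apply tri_p1 | sdef | sdef | sdef | sdef | sdef | sdef | sdef | sdef | sdef | sdef | sdef]]) |sdef]) |sdef]) | (destruct u as [n|b|u1 u2|c]; [sdef|sdef| (destruct u1 as [n|b|u11 u12|c]; [sdef|sdef| (destruct u11 as [n|b|v1 v2|c]; [sdef|sdef|sdef| destruct c; [sdef | apply tri_p2 | sdef | sdef | sdef | sdef | sdef | sdef | sdef | sdef | sdef | sdef | sdef]]) |sdef]) |sdef]) | sdef | sdef | sdef | sdef | sdef | sdef | sdef | sdef | sdef].
Qed.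


Lemma tri : forall t u, par t u -> par u (cd t).
Proof.
  induction 1; simpl; try assumption.
  - constructor.
  - constructor.
  - constructor; auto.
  - apply tri_app; auto.
  - apply par_subst; auto.
  - apply par_app; auto.
  - apply par_app; auto.
  - repeat apply par_app; auto.
Qed.

Lemma diamond : forall t u v, par t u -> par t v -> exists w, par u w /\ par v w.
Proof. intros. exists (cd t). split; apply tri; auto. Qed.

Lemma strip : forall t v, reds t v -> forall u, par t u -> exists w, reds u w /\ par v w.
Proof.
  induction 1; intros.
  - exists u. split. constructor. auto.
  - destruct (diamond _ _ _ H1 (step_par _ _ H)) as [w1 [A B]].
    destruct (IHreds _ B) as [w [C D]].
    exists w. split; auto. eapply reds_trans. apply par_reds; eauto. auto.
Qed.

Lemma confluence : forall t u, reds t u -> forall v, reds t v -> exists w, reds u w /\ reds v w.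
Proof.
  induction 1; intros.
  - exists v. split; auto. constructor.
  - destruct (strip _ _ H1 _ (step_par _ _ H)) as [w1 [A B]].
    destruct (IHreds _ A) as [w [C D]].
    exists w. split; auto. eapply reds_trans. apply par_reds; eauto. auto.
Qed.

Lemma num_normal : forall n x, reds (num n) x -> x = num n.
Proof.
  assert (forall n x, step (num n) x -> False).
  { induction n; simpl; intros x H; inversion H; subst.
    - inversion H3.
    - eauto. }
  intros n x H1. inversion H1; subst; auto. exfalso; eauto.
Qed.

Lemma star_normal : forall x, reds (Con CStar) x -> x = Con CStar.
Proof. intros x H. inversion H; subst; auto. inversion H0. Qed.

Lemma inl_reds : forall a x, reds (App (Con CInl) a) x -> exists a', x = App (Con CInl) a' /\ reds a a'.
Proof.
  intros a x H. remember (App (Con CInl) a) as t. revert a Heqt.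
  induction H; intros; subst.
  - eexists; split; eauto. constructor.
  - inversion H; subst.
    + inversion H4.
    + destruct (IHreds _ eq_refl) as [a'' [E R]]. exists a''. split; auto. econstructor; eauto.
Qed.

Definition conv a b := exists c, reds a c /\ reds b c.

Lemma conv_refl : forall a, conv a a.
Proof. intros; exists a; split; constructor. Qed.
Lemma conv_sym : forall a b, conv a b -> conv b a.
Proof. intros a b [c [A B]]; exists c; auto. Qed.
Lemma conv_trans : forall a b c, conv a b -> conv b c -> conv a c.
Proof.
  intros a b c [x [A B]] [y [C D]].
  destruct (confluence _ _ B _ C) as [w [E F]].
  exists w. split; eapply reds_trans; eauto.
Qed.
Lemma reds_conv : forall a b, reds a b -> conv a b.
Proof. intros. exists b; split; auto. constructor. Qed.

Lemma conv_num : forall a b n, conv a b -> reds a (num n) -> reds b (num n).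
Proof.
  intros a b n [c [A B]] H.
  destruct (confluence _ _ H _ A) as [w [E F]].
  apply num_normal in E. subst. eapply reds_trans; eauto.
Qed.

Lemma reds_par_ind : forall (P : term -> term -> Prop),
  (forall t, P t t) -> (forall a b c, par a b -> P b c -> P a c) ->
  forall a b, reds a b -> P a b.
Proof. intros P H1 H2 a b H. induction H; auto. eapply H2; [apply step_par; eauto | auto]. Qed.

Lemma reds_subst_t : forall t t' k u, reds t t' -> reds (subst k u t) (subst k u t').
Proof.
  intros t t' k u H. revert t t' H.
  apply reds_par_ind. intros; constructor.
  intros. eapply reds_trans; eauto. apply par_reds. apply par_subst; auto.
Qed.

Lemma reds_subst_u : forall t k u u', reds u u' -> reds (subst k u t) (subst k u' t).
Proof.
  intros t k u u' H. revert u u' H.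
  apply reds_par_ind. intros; constructor.
  intros. eapply reds_trans; eauto. apply par_reds. apply par_subst; auto.
Qed.

Lemma msubst_reds : forall rho a b, reds a b -> reds (msubst rho a) (msubst rho b).
Proof. induction rho; simpl; intros; auto. apply IHrho. apply reds_subst_t; auto. Qed.

Lemma msubst_conv_t : forall rho a b, conv a b -> conv (msubst rho a) (msubst rho b).
Proof. intros rho a b [c [A B]]. exists (msubst rho c). split; apply msubst_reds; auto. Qed.

Lemma msubst_conv : forall rho rho', Forall2 conv rho rho' -> forall t,
  conv (msubst rho t) (msubst rho' t).
Proof.
  induction 1; intros; simpl. apply conv_refl.
  eapply conv_trans. apply msubst_conv_t.
  2: apply IHForall2.
  destruct H as [c [A B]]. exists (subst 0 c t). split; apply reds_subst_u; auto.
Qed.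


Lemma typed_closed : forall G t T, has_type G t T -> closed_at (length G) t.
Proof.
  induction 1; simpl; auto.
  apply nth_error_Some. rewrite H. discriminate.
Qed.

Lemma closed_lift : forall t k d c, closed_at k t -> k <= c -> lift d c t = t.
Proof.
  induction t; simpl; intros.
  - destruct (Nat.leb_spec c n); auto. lia.
  - f_equal. apply IHt with (S k); auto. lia.
  - destruct H. f_equal; eauto.
  - auto.
Qed.

Lemma closed_subst : forall t k j u, closed_at k t -> k <= j -> subst j u t = t.
Proof.
  induction t; simpl; intros.
  - destruct (Nat.eqb_spec n j). lia. destruct (Nat.ltb_spec j n); auto. lia.
  - f_equal. apply IHt with (S k); auto. lia.
  - destruct H. f_equal; eauto.
  - auto.
Qed.

Lemma cl_lift : forall t T, closedT t T -> forall d c, lift d c t = t.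
Proof. intros. eapply closed_lift. apply typed_closed in H. exact H. simpl; lia. Qed.
Lemma cl_subst : forall t T, closedT t T -> forall k u, subst k u t = t.
Proof. intros. eapply closed_subst. apply typed_closed in H. exact H. simpl; lia. Qed.

Lemma ty_weak : forall G t T, has_type G t T -> forall G1 G2 D, G = G1 ++ G2 ->
  has_type (G1 ++ D ++ G2) (lift (length D) (length G1) t) T.
Proof.
  induction 1; intros; subst; simpl; try (econstructor; eauto; fail).
  - destruct (Nat.leb_spec (length G1) n).
    + constructor. rewrite nth_error_app2 in H by auto.
      rewrite nth_error_app2 by lia. rewrite nth_error_app2 by lia.
      rewrite <- H. f_equal. lia.
    + constructor. rewrite nth_error_app1 in H by auto. rewrite nth_error_app1 by auto. auto.
  - constructor. apply (IHhas_type (A :: G1)). auto.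
Qed.

Lemma ty_subst : forall G t T, has_type G t T -> forall G1 U G2 u, G = G1 ++ U :: G2 ->
  has_type G2 u U -> has_type (G1 ++ G2) (subst (length G1) u t) T.
Proof.
  induction 1; intros; subst; simpl; try (econstructor; eauto; fail).
  - destruct (Nat.eqb_spec n (length G1)).
    + subst. rewrite nth_error_app2 in H by lia. rewrite Nat.sub_diag in H. simpl in H.
      inversion H; subst.
      apply (ty_weak _ _ _ H1 [] G2 G1). auto.
    + destruct (Nat.ltb_spec (length G1) n).
      * constructor. rewrite nth_error_app2 in H by lia. rewrite nth_error_app2 by lia.
        destruct (n - length G1) eqn:E. lia. simpl in H. rewrite <- H. f_equal. lia.
      * constructor. rewrite nth_error_app1 in H by lia. rewrite nth_error_app1 by lia. auto.
  - constructor. apply (IHhas_type (A :: G1) U G2 u); auto.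
Qed.

Ltac invty := repeat match goal with
  | H : has_type _ (App _ _) _ |- _ => inversion H; subst; clear H
  | H : has_type _ (Con _) _ |- _ => inversion H; subst; clear H
  | H : has_type _ (Lam _) _ |- _ => inversion H; subst; clear H
  end.

Lemma sr_step : forall t t', step t t' -> forall G T, has_type G t T -> has_type G t' T.
Proof.
  induction 1; intros G T HT.
  - invty. apply (ty_subst _ _ _ H3 [] A G u); auto.
  - invty. auto.
  - invty. auto.
  - invty. econstructor; eauto.
  - invty. econstructor; eauto.
  - invty. auto.
  - invty. econstructor. econstructor. eauto. eauto. econstructor. econstructor. econstructor. econstructor. all: eauto.
  - inversion HT; subst. econstructor; eauto.
  - inversion HT; subst. econstructor; eauto.
  - inversion HT; subst. econstructor; eauto.
Qed.

Lemma sr : forall t t', reds t t' -> forall G T, has_type G t T -> has_type G t' T.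
Proof. induction 1; intros; eauto using sr_step. Qed.


Lemma Forall2_sym : forall l l', Forall2 conv l l' -> Forall2 conv l' l.
Proof. induction 1; constructor; auto. apply conv_sym; auto. Qed.

Lemma Forall2_map_transfer : forall rho rho', Forall2 conv rho rho' -> forall ts ns,
  Forall2 (fun t n => reds t (num n)) (map (msubst rho) ts) ns ->
  Forall2 (fun t n => reds t (num n)) (map (msubst rho') ts) ns.
Proof.
  intros rho rho' HR. induction ts; intros ns H; simpl in *; inversion H; subst; constructor; auto.
  eapply conv_num; eauto. apply msubst_conv; auto.
Qed.

Lemma num_ty : forall n, closedT (num n) TNat.
Proof. induction n; simpl; econstructor; eauto; constructor. Qed.

Lemma real_ty : forall S s rho A r, real S s rho A r -> closedT r (rtype A).
Proof. destruct A; simpl; intros; tauto. Qed.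

Lemma transfer : forall S s A rho rho', Forall2 conv rho rho' ->
  forall r r', closedT r' (rtype A) -> reds r' r -> real S s rho A r -> real S s rho' A r'.
Proof.
  intros S s A. induction A; intros rho rho' HR r r' Hty Hred Hr; simpl in *;
    destruct Hr as [Hty0 Hr]; split; auto.
  - destruct Hr as [Hs [ns [F Hp]]]. split. eapply reds_trans; eauto.
    exists ns. split; auto. eapply Forall2_map_transfer; eauto.
  - destruct Hr as [_ []].
  - split.
    + apply (IHA1 rho rho' HR (App (Con CP1) r)); [econstructor; [constructor|exact Hty] | apply reds_appr; auto | apply Hr].
    + apply (IHA2 rho rho' HR (App (Con CP2) r)); [econstructor; [constructor|exact Hty] | apply reds_appr; auto | apply Hr].
  - destruct Hr as [[a [Ha Ra]]|[b [Hb Rb]]].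
    + left. exists a. split. eapply reds_trans; eauto. eapply IHA1; eauto using real_ty. constructor.
    + right. exists b. split. eapply reds_trans; eauto. eapply IHA2; eauto using real_ty. constructor.
  - intros p Hp.
    assert (Hp' : real S s rho A1 p).
    { eapply IHA1. apply Forall2_sym; eauto. eapply real_ty; eauto. constructor. auto. }
    destruct (Hr p Hp') as [Ht [[x [Hx Rx]]|[e [He Pe]]]];
      (split; [econstructor; [exact Hty | eapply real_ty; eauto] |]).
    + left. exists x. split. eapply reds_trans; [|exact Hx]. apply reds_appl, reds_appl; auto.
      eapply IHA2; eauto using real_ty. constructor.
    + right. exists e. split; auto. eapply reds_trans; [|exact He]. apply reds_appl, reds_appl; auto.
  - intros n. destruct (Hr n) as [Ht [[x [Hx Rx]]|[e [He Pe]]]];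
      (split; [econstructor; [exact Hty | apply num_ty] |]).
    + left. exists x. split. eapply reds_trans; [|exact Hx]. apply reds_appl, reds_appl; auto.
      eapply IHA; eauto using real_ty. constructor. apply conv_refl. auto. constructor.
    + right. exists e. split; auto. eapply reds_trans; [|exact He]. apply reds_appl, reds_appl; auto.
  - eapply IHA; [ | | | exact Hr].
    + constructor; [apply conv_sym, reds_conv, reds_appr; auto | exact HR].
    + econstructor. constructor. exact Hty.
    + apply reds_appr; auto.
Qed.


Lemma unit_ty : forall X, closedT unitT (TArr X (TT X)).
Proof. intros. unfold closedT, unitT, TT. repeat econstructor. Qed.
Lemma star_ty : forall B C, closedT starT (TArr (TArr B (TT C)) (TArr (TT B) (TT C))).
Proof. intros. unfold closedT, starT, TT. repeat econstructor. Qed.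
Lemma merge_ty : forall B C, closedT mergeT (TArr (TT B) (TArr (TT C) (TT (TProd B C)))).
Proof. intros. unfold closedT, mergeT, TT. repeat econstructor. Qed.

Lemma ex_ty : forall p X s e, closedT p (TT X) -> closedT s TState ->
  reds (App p s) (App (Con CInr) e) -> closedT e TEx.
Proof.
  intros. assert (H2 : has_type [] (App p s) (TSum X TEx)) by (econstructor; eauto).
  pose proof (sr _ _ H1 _ _ H2) as H3. inversion H3; subst. match goal with Hc : has_type _ (Con CInr) _ |- _ => inversion Hc; subst end. auto.
Qed.

Lemma reds_case : forall a a' f g, reds a a' ->
  reds (ap3 (Con CCase) a f g) (ap3 (Con CCase) a' f g).
Proof. intros. apply reds_appl, reds_appl, reds_appr; auto. Qed.

Ltac b1 := eapply reds_step; [repeat first [apply st_beta | apply st_case_inl | apply st_case_inr | apply st_appl] | ]; simpl.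
Ltac clr := repeat match goal with
  | H : forall d c : nat, lift d c _ = _ |- _ => rewrite H
  | H : forall (k : nat) (u : term), subst k u _ = _ |- _ => rewrite H end.
Ltac cl H := let L := fresh "L" in let S := fresh "Sb" in
  pose proof (cl_lift _ _ H) as L; pose proof (cl_subst _ _ H) as S.

Theorem mainTheorem4 :
  forall (S : setup), wf_setup S ->
  forall s : term, closedT s TState ->
    (forall (A : formula) (r : term), closed_formula A ->
        real S s [] A r -> realIR S s [] A (App unitT r)) /\
    (forall (B C : formula) (r p : term), closed_formula B -> closed_formula C ->
        real S s [] (FImp B C) r -> realIR S s [] B p ->
        realIR S s [] C (ap2 starT r p)) /\
    (forall (B C : formula) (p q : term), closed_formula B -> closed_formula C ->
        realIR S s [] B p -> realIR S s [] C q ->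
        realIR S s [] (FAnd B C) (ap2 mergeT p q)).
Proof.
  intros S HS s Hs. cl Hs.
  split; [|split].
  - intros A r _ Hr. pose proof (real_ty _ _ _ _ _ Hr) as Hrt. cl Hrt.
    split. econstructor. apply unit_ty. exact Hrt.
    left. exists r. split; auto. unfold unitT. b1. clr. b1. clr. constructor.
  - intros B C r p _ _ Hr [Hpt Hp]. pose proof (real_ty _ _ _ _ _ Hr) as Hrt. cl Hrt. cl Hpt.
    destruct Hr as [_ Hr].
    split. econstructor. econstructor. apply star_ty. exact Hrt. exact Hpt.
    destruct Hp as [[x [Hx Rx]]|[e [He Pe]]].
    + pose proof (real_ty _ _ _ _ _ Rx) as Hxt. cl Hxt.
      destruct (Hr x Rx) as [_ [[y [Hy Ry]]|[e [He Pe]]]].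
      * left. exists y. split; auto. unfold starT. b1. b1. b1. clr.
        eapply reds_trans. apply reds_case, Hx. b1. b1. clr. exact Hy.
      * right. exists e. split; auto. unfold starT. b1. b1. b1. clr.
        eapply reds_trans. apply reds_case, Hx. b1. b1. clr. exact He.
    + right. exists e. split; auto. unfold starT. b1. b1. b1. clr.
      eapply reds_trans. apply reds_case, He. b1. constructor.
  - intros B C p q _ _ [Hpt Hp] [Hqt Hq]. cl Hpt. cl Hqt.
    split. econstructor. econstructor. apply merge_ty. exact Hpt. exact Hqt.
    destruct Hp as [[x [Hx Rx]]|[e1 [He1 Pe1]]];
    destruct Hq as [[y [Hy Ry]]|[e2 [He2 Pe2]]].
    + pose proof (real_ty _ _ _ _ _ Rx) as Hxt. cl Hxt.
      pose proof (real_ty _ _ _ _ _ Ry) as Hyt. cl Hyt.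
      left. exists (ap2 (Con CPair) x y). split.
      * unfold mergeT. b1. b1. b1. clr.
        eapply reds_trans. apply reds_case, Hx. b1. b1. clr.
        eapply reds_trans. apply reds_case, Hy. b1. b1. clr. constructor.
      * simpl. split. econstructor. econstructor. constructor. exact Hxt. exact Hyt.
        split.
        -- apply (transfer S s B [] [] (Forall2_nil _) x); auto.
           econstructor. constructor. econstructor. econstructor. constructor. exact Hxt. exact Hyt.
           apply reds_one. constructor.
        -- apply (transfer S s C [] [] (Forall2_nil _) y); auto.
           econstructor. constructor. econstructor. econstructor. constructor. exact Hxt. exact Hyt.
           apply reds_one. constructor.
    + pose proof (real_ty _ _ _ _ _ Rx) as Hxt. cl Hxt.
      right. exists e2. split; auto.
      unfold mergeT. b1. b1. b1. clr.
      eapply reds_trans. apply reds_case, Hx. b1. b1. clr.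
      eapply reds_trans. apply reds_case, He2. b1. constructor.
    + pose proof (ex_ty _ _ _ _ Hpt Hs He1) as He1t. cl He1t.
      pose proof (real_ty _ _ _ _ _ Ry) as Hyt. cl Hyt.
      right. exists e1. split; auto.
      unfold mergeT. b1. b1. b1. clr.
      eapply reds_trans. apply reds_case, He1. b1. b1. clr.
      eapply reds_trans. apply reds_case, Hy. b1. b1. clr. constructor.
    + pose proof (ex_ty _ _ _ _ Hpt Hs He1) as He1t. cl He1t.
      pose proof (ex_ty _ _ _ _ Hqt Hs He2) as He2t. cl He2t.
      right. exists (ap2 (Con CExmerge) e1 e2). split.
      * unfold mergeT. b1. b1. b1. clr.
        eapply reds_trans. apply reds_case, He1. b1. b1. clr.
        eapply reds_trans. apply reds_case, He2. b1. b1. clr. constructor.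
      * destruct HS as [_ [_ HEX]]. apply HEX; auto.
Qed.
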